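(* For every $n\ge1$, the map $\pi:\widehat{\mathcal{T}}_n\to\widehat{\mathcal{T}}_n$ is a bijection.
   Context: A plane binary tree is a finite rooted tree in which every vertex is either an endpoint (a leaf, with no children) or has exactly two children, an ordered left child and right child. Every non-root vertex is thus either a left descendent or a right descendent of its parent. The endpoints are ordered from left to right in the planar order. $\mathcal{T}_n$ denotes the set of plane binary trees with exactly $n+2$ endpoints. A last branching vertex of a plane binary tree is a non-endpoint vertex both of whose children are endpoints. For $n\ge1$ the root is never a last branching vertex. A marked tree is a pair $(T,v)$ with $T\in\mathcal{T}_n$ and $v$ a last branching vertex of $T$. The set of marked trees is $\widehat{\mathcal{T}}_n$. Definition of $\pi$. Let $(T,v)\in\widehat{\mathcal{T}}_n$, and let $a$ and $b$ be the left and right children of $v$ (both endpoints). Case 1: $v$ is a right child. - Delete the endpoint $a$ together with the edge $va$. The vertex $v$ and its remaining child $b$ are merged into a single endpoint, sitting at $v$'s position; this endpoint is a right child. The result is a tree with $n+1$ endpoints. - If $b$ was not the rightmost endpoint of $T$: let $L$ be the first endpoint to the right of this new endpoint that is a right child. Replace $L$ by a new internal vertex $w$ (still a right child, in $L$'s place) with two new endpoint children. - If $b$ was the rightmost endpoint of $T$: let $L$ be the rightmost endpoint of the reduced tree that is a left child. Replace $L$ by a new internal vertex $w$ (a left child, in $L$'s place) with two new endpoint children. - In either sub-case, $\pi(T,v)=(T',w)$, where $T'$ is the resulting tree and the mark is on $w$. Case 2: $v$ is a left child. Apply the mirror image of Case 1, exchanging left and right everywhere. - Delete $b$ and the edge $vb$,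 merging $v$ and $a$ into a single endpoint, which is a left child. - If $a$ was not the leftmost endpoint of $T$, graft a cherry (an internal vertex $w$ with two new endpoint children) onto the first left-child endpoint to its left. - Otherwise, graft the cherry onto the leftmost endpoint that is a right child. - Mark the new vertex $w$. *)

(* Defs.v *)
From mathcomp Require Import all_boot.
Set Implicit Arguments. Unset Strict Implicit. Unset Printing Implicit Defensive.

Inductive tree : Type := Leaf | Node of tree & tree.

(* Vertices are addressed by their path from the root:
   false = go to the left child, true = go to the right child. *)
Definition vertex := seq bool.

Fixpoint subtree (t : tree) (p : vertex) : option tree :=
  match p with
  | [::] => Some t
  | b :: p' => match t with
               | Leaf => None
               | Node l r => subtree (if b then r else l) p'
               end
  end.

(* Replace the subtree at vertex p by s (no-op if p is not a vertex). *)
Fixpoint replace (t : tree) (p : vertex) (s : tree) : tree :=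
  match p with
  | [::] => s
  | b :: p' => match t with
               | Leaf => Leaf
               | Node l r => if b then Node l (replace r p' s)
                             else Node (replace l p' s) r
               end
  end.

Fixpoint leaves (t : tree) : seq vertex :=
  match t with
  | Leaf => [:: [::]]
  | Node l r => map (cons false) (leaves l) ++ map (cons true) (leaves r)
  end.

Definition in_T (n : nat) (t : tree) : bool := size (leaves t) == n.+2.

(* A vertex is a right (resp. left) child iff its path is nonempty and
   ends with true (resp. false). The root is neither. *)
Definition is_right (p : vertex) : bool := last false p.
Definition is_left (p : vertex) : bool := ~~ last true p.

Definition last_branching (t : tree) (v : vertex) : bool :=
  if subtree t v is Some (Node Leaf Leaf) then true else false.

Definition marked_tree := (tree * vertex)%type.
Definition in_hatT (n : nat) (x : marked_tree) : bool :=
  in_T n x.1 && last_branching x.1 x.2.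

Definition cherry := Node Leaf Leaf.

Definition pi_map (x : marked_tree) : marked_tree :=
  let: (T, v) := x in
  let T1 := replace T v Leaf in
  let ls := leaves T1 in
  let i := index v ls in
  let L :=
    if is_right v then
      (* Case 1. b (path rcons v true) is the rightmost endpoint of T iff
         v consists only of right steps. *)
      if has (fun b => ~~ b) v then
        (* first endpoint to the right of the new endpoint that is a right child *)
        let rs := drop i.+1 ls in nth [::] rs (find is_right rs)
      else
        last [::] (filter is_left ls)
    else
      (* Case 2 (mirror). a is the leftmost endpoint iff v only has left steps. *)
      if has id v then
        (* first endpoint to the left of the new endpoint that is a left child *)
        last [::] (filter is_left (take i ls))
      else
        nth [::] ls (find is_right ls)
  in
  (replace T1 L cherry, L).

(* Main.v *)
Require Import Defs.
From mathcomp Require Import all_boot.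
Import Defs.
Set Implicit Arguments. Unset Strict Implicit. Unset Printing Implicit Defensive.

Section SeqLemmas.
Variable T : eqType.
Implicit Types (s a b : seq T) (x : T) (p : pred T).

Lemma idx_split a b x : uniq (a ++ x :: b) -> index x (a ++ x :: b) = size a.
Proof.
move=> U; rewrite index_cat.
have : x \notin a.
  move: U; rewrite uniq_catC /= mem_cat => /andP [/norP [_ H] _]; exact: H.
move=> /negbTE ->; by rewrite /= eqxx addn0.
Qed.

Lemma idxE s a b x : uniq s -> s = a ++ x :: b -> index x s = size a.
Proof. by move=> U E; rewrite E idx_split // -E. Qed.

Lemma take_split a b x : take (size a) (a ++ x :: b) = a.
Proof. exact: take_size_cat. Qed.

Lemma drop_split a b x : drop (size a).+1 (a ++ x :: b) = b.
Proof. by rewrite -cat_rcons drop_size_cat // size_rcons. Qed.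

Lemma find_split p x0 s : has p s ->
  exists s1 s2, s = s1 ++ nth x0 s (find p s) :: s2 /\ ~~ has p s1 /\ p (nth x0 s (find p s)).
Proof.
elim: s => //= y s IH.
case Py: (p y) => /= H.
  by exists [::], s; rewrite Py.
have [s1 [s2 [E [N P]]]] := IH H.
exists (y :: s1), s2; rewrite /= Py N; split => //.
by rewrite {1}E.
Qed.

Lemma last_filter_split p x0 s : has p s ->
  exists s1 s2, s = s1 ++ last x0 (filter p s) :: s2 /\ ~~ has p s2 /\ p (last x0 (filter p s)).
Proof.
elim/last_ind: s => // s y IH.
rewrite filter_rcons has_rcons.
case Py: (p y) => /= H.
  by exists s, [::]; rewrite last_rcons cats1.
have [s1 [s2 [E [N P]]]] := IH H.
exists s1, (rcons s2 y); rewrite has_rcons Py N; split => //.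
by rewrite {1}E rcons_cat.
Qed.

Lemma last_filter_cat p x0 a b x : p x -> ~~ has p b ->
  last x0 (filter p (a ++ x :: b)) = x.
Proof.
move=> Px Nb; rewrite filter_cat /= Px.
have -> : filter p b = [::] by apply/eqP; move: Nb; rewrite has_filter negbK.
by rewrite last_cat.
Qed.

Lemma nth_find_cat p x0 a b x : p x -> ~~ has p a ->
  nth x0 (a ++ x :: b) (find p (a ++ x :: b)) = x.
Proof.
move=> Px Na; rewrite find_cat (negbTE Na) /= Px addn0 nth_cat ltnn subnn.
by [].
Qed.

Lemma notin_right a b x : uniq (a ++ x :: b) -> x \notin b.
Proof. by rewrite cat_uniq => /and3P [_ _ /andP [H _]]. Qed.

Lemma tail_nil x0 a b x : uniq (a ++ x :: b) -> last x0 (a ++ x :: b) = x -> b = [::].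
Proof.
case: b => // y b U; rewrite last_cat /= => E.
have := notin_right U; by rewrite -{1}E mem_last.
Qed.

Lemma head_nil x0 a b x : uniq (a ++ x :: b) -> head x0 (a ++ x :: b) = x -> a = [::].
Proof.
case: a => // y a U /= E; move: U; rewrite E /= mem_cat inE eqxx orbT.
by case/andP.
Qed.

End SeqLemmas.

Lemma isl_r (p : seq bool) : p != [::] -> is_left p = ~~ is_right p.
Proof. by case: p. Qed.

Lemma allF_left (p : seq bool) : p != [::] -> ~~ has id p -> is_left p.
Proof.
case: p => // y p _ H; rewrite /is_left /=.
apply/negP => L; move/negP: H; apply; apply/hasP; exists (last y p) => //.
exact: mem_last.
Qed.

Lemma allT_right (p : seq bool) : p != [::] -> ~~ has (fun b => ~~ b) p -> is_right p.
Proof.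
case: p => // y p _ H; rewrite /is_right /=.
apply/negPn/negP => L; move/negP: H; apply; apply/hasP; exists (last y p) => //.
exact: mem_last.
Qed.

Inductive good (ls : seq vertex) : Prop :=
  Good of uniq ls & ls != [::] & (forall p, p \in ls -> p != [::]) &
      (forall p, p \in ls -> ~~ has id p -> p = head [::] ls) &
      ~~ has id (head [::] ls) &
      (forall p, p \in ls -> ~~ has (fun b => ~~ b) p -> p = last [::] ls) &
      ~~ has (fun b => ~~ b) (last [::] ls).

Definition Lsel (ls : seq vertex) (v : vertex) : vertex :=
  if is_right v then
    if has (fun b => ~~ b) v then
      nth [::] (drop (index v ls).+1 ls) (find is_right (drop (index v ls).+1 ls))
    else last [::] (filter is_left ls)
  else
    if has id v then last [::] (filter is_left (take (index v ls) ls))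
    else nth [::] ls (find is_right ls).

Definition Vsel (ls : seq vertex) (w : vertex) : vertex :=
  if is_right w then
    if has is_right (take (index w ls) ls) then
      last [::] (filter is_right (take (index w ls) ls))
    else head [::] ls
  else
    if has is_left (drop (index w ls).+1 ls) then
      nth [::] (drop (index w ls).+1 ls) (find is_left (drop (index w ls).+1 ls))
    else last [::] ls.

Lemma core1 ls v : good ls -> v \in ls -> Lsel ls v \in ls /\ Vsel ls (Lsel ls v) = v.
Proof.
case=> U nz NE HF HH TF TT Hv.
have vnz := NE v Hv.
have Hd : head [::] ls \in ls by case: (ls) nz => // y s _; rewrite inE eqxx.
have Hl : last [::] ls \in ls by case: (ls) nz => // y s _ /=; exact: mem_last.
have hL : is_left (head [::] ls) := allF_left (NE _ Hd) HH.
have lR : is_right (last [::] ls) := allT_right (NE _ Hl) TT.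
have [a [b E]] : exists a b, ls = a ++ v :: b by case/splitPr: Hv => a b; exists a, b.
have Ia : index v ls = size a by rewrite E idx_split // -E.
rewrite /Lsel Ia.
case Rv: (is_right v).
- case Nv: (has (fun b => ~~ b) v).
  + have -> : drop (size a).+1 ls = b by rewrite E drop_split.
    have bnz : b != [::].
      apply/eqP => b0; move: TT; rewrite E b0 last_cat /= Nv; by [].
    have hb : has is_right b.
      apply/hasP; exists (last [::] ls) => //.
      rewrite E last_cat /=; case: (b) bnz => // y b' _ /=; exact: mem_last.
    have [b1 [b2 [Eb [Nb RL]]]] := find_split [::] hb.
    move: Eb RL; set L := nth [::] b (find is_right b) => Eb RL.
    have E2 : ls = (a ++ v :: b1) ++ L :: b2 by rewrite E {1}Eb -catA.
    split; first by rewrite E2 mem_cat inE eqxx orbT.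
    rewrite /Vsel RL (idxE U E2) E2 take_split has_cat /= Rv orbT.
    by rewrite last_filter_cat.
  + have vl : v = last [::] ls by apply: TF => //; rewrite Nv.
    have hl : has is_left ls by apply/hasP; exists (head [::] ls).
    have [c1 [c2 [Ec [Nc LL]]]] := last_filter_split [::] hl.
    move: Ec LL; set L := last [::] (filter is_left ls) => Ec LL.
    have Lin : L \in ls by rewrite Ec mem_cat inE eqxx orbT.
    split => //.
    have RL : is_right L = false by move: LL; rewrite isl_r ?NE // => /negbTE.
    rewrite /Vsel RL (idxE U Ec) Ec drop_split (negbTE Nc).
    by rewrite -Ec.
- have Lv : is_left v by rewrite isl_r // Rv.
  case Iv: (has id v).
  + have -> : take (size a) ls = a by rewrite E take_split.
    have anz : a != [::].
      apply/eqP => a0; move: HH; rewrite E a0 /= Iv; by [].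
    have ha : has is_left a.
      apply/hasP; exists (head [::] ls) => //.
      rewrite E; case: (a) anz => // y a' _ /=; rewrite inE eqxx //.
    have [a1 [a2 [Ea [Na LL]]]] := last_filter_split [::] ha.
    move: Ea LL; set L := last [::] (filter is_left a) => Ea LL.
    have E2 : ls = a1 ++ L :: (a2 ++ v :: b) by rewrite E {1}Ea -catA.
    split; first by rewrite E2 mem_cat inE eqxx orbT.
    have RL : is_right L = false.
      have Lin : L \in ls by rewrite E2 mem_cat inE eqxx orbT.
      by move: LL; rewrite isl_r ?NE // => /negbTE.
    rewrite /Vsel RL (idxE U E2) E2 drop_split has_cat /= Lv orbT.
    by rewrite nth_find_cat.
  + have vh : v = head [::] ls by apply: HF => //; rewrite Iv.
    have hr : has is_right ls by apply/hasP; exists (last [::] ls).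
    have [c1 [c2 [Ec [Nc RL]]]] := find_split [::] hr.
    move: Ec RL; set L := nth [::] ls (find is_right ls) => Ec RL.
    have Lin : L \in ls by rewrite Ec mem_cat inE eqxx orbT.
    split => //.
    rewrite /Vsel RL (idxE U Ec) Ec take_split (negbTE Nc).
    by rewrite -Ec.
Qed.

Lemma core2 ls w : good ls -> w \in ls -> Vsel ls w \in ls /\ Lsel ls (Vsel ls w) = w.
Proof.
case=> U nz NE HF HH TF TT Hw.
have wnz := NE w Hw.
have Hd : head [::] ls \in ls by case: (ls) nz => // y s _; rewrite inE eqxx.
have Hl : last [::] ls \in ls by case: (ls) nz => // y s _ /=; exact: mem_last.
have hL : is_left (head [::] ls) := allF_left (NE _ Hd) HH.
have lR : is_right (last [::] ls) := allT_right (NE _ Hl) TT.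
have [a [b E]] : exists a b, ls = a ++ w :: b by case/splitPr: Hw => a b; exists a, b.
have Ia : index w ls = size a by rewrite E idx_split // -E.
have Ta : take (size a) ls = a by rewrite E take_split.
have Db : drop (size a).+1 ls = b by rewrite E drop_split.
rewrite /Vsel Ia Ta Db.
case Rw: (is_right w).
- case Ha: (has is_right a).
  + have [a1 [a2 [Ea [Na RV]]]] := last_filter_split [::] Ha.
    move: Ea RV; set V := last [::] (filter is_right a) => Ea RV.
    have E2 : ls = a1 ++ V :: (a2 ++ w :: b) by rewrite E {1}Ea -catA.
    have Vin : V \in ls by rewrite E2 mem_cat inE eqxx orbT.
    split => //.
    have NV : has (fun b => ~~ b) V.
      apply/negPn/negP => H; have := TF V Vin H.
      have U2 : uniq (a1 ++ V :: (a2 ++ w :: b)) by rewrite -E2.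
      move/esym; rewrite {1}E2 => /(tail_nil U2); by case: (a2).
    rewrite /Lsel RV NV (idxE U E2) E2 drop_split.
    by rewrite nth_find_cat.
  + split => //.
    have RV : is_right (head [::] ls) = false.
      by move: hL; rewrite isl_r ?NE // => /negbTE.
    rewrite /Lsel RV (negbTE HH) E nth_find_cat //; by rewrite Ha.
- have Lw : is_left w by rewrite isl_r // Rw.
  case Hb: (has is_left b).
  + have [b1 [b2 [Eb [Nb LV]]]] := find_split [::] Hb.
    move: Eb LV; set V := nth [::] b (find is_left b) => Eb LV.
    have E2 : ls = (a ++ w :: b1) ++ V :: b2 by rewrite E {1}Eb -catA.
    have Vin : V \in ls by rewrite E2 mem_cat inE eqxx orbT.
    split => //.
    have RV : is_right V = false by move: LV; rewrite isl_r ?NE // => /negbTE.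
    have IV : has id V.
      apply/negPn/negP => H; have := HF V Vin H.
      have U2 : uniq ((a ++ w :: b1) ++ V :: b2) by rewrite -E2.
      move/esym; rewrite {1}E2 => /(head_nil U2); by case: (a).
    rewrite /Lsel RV IV (idxE U E2) E2 take_split.
    by rewrite last_filter_cat.
  + split => //.
    rewrite /Lsel lR (negbTE TT) E last_filter_cat //; by rewrite Hb.
Qed.

Lemma leaves_nil t : leaves t != [::].
Proof. elim: t => //= l IHl r _; by case: (leaves l) IHl. Qed.

Lemma mem_cons_map (b c : bool) (p : vertex) (s : seq vertex) :
  (b :: p \in map (cons c) s) = (b == c) && (p \in s).
Proof.
apply/mapP/andP => [[q Hq [-> ->]] | [/eqP -> Hp]]; first by split.
by exists p.
Qed.

Lemma uniq_leaves t : uniq (leaves t).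
Proof.
elim: t => //= l IHl r IHr.
rewrite cat_uniq !map_inj_uniq ?IHl ?IHr //=; try by move=> x y [].
rewrite andbT; apply/hasPn => x /mapP [y _ ->]; by rewrite /= mem_cons_map.
Qed.

Lemma head_leaves t p : p \in leaves t -> ~~ has id p -> p = head [::] (leaves t).
Proof.
elim: t p => [|l IHl r IHr] p /=; first by rewrite inE => /eqP ->.
rewrite mem_cat => /orP [/mapP [q Hq ->] | /mapP [q Hq ->]] //= H.
rewrite (IHl q Hq H); by case: (leaves l) (leaves_nil l).
Qed.

Lemma head_leavesF t : ~~ has id (head [::] (leaves t)).
Proof.
elim: t => //= l IHl r _; move: IHl; by case: (leaves l) (leaves_nil l).
Qed.

Lemma last_leaves_node l r :
  last [::] (leaves (Node l r)) = true :: last [::] (leaves r).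
Proof.
rewrite /= last_cat; case: (leaves r) (leaves_nil r) => // y s _.
by rewrite /= last_map.
Qed.

Lemma last_leaves t p : p \in leaves t -> ~~ has (fun b => ~~ b) p -> p = last [::] (leaves t).
Proof.
elim: t p => [|l IHl r IHr] p; first by rewrite /= inE => /eqP ->.
rewrite last_leaves_node /= mem_cat => /orP [/mapP [q Hq ->] | /mapP [q Hq ->]] //= H.
by rewrite (IHr q Hq H).
Qed.

Lemma last_leavesT t : ~~ has (fun b => ~~ b) (last [::] (leaves t)).
Proof. elim: t => //= l _ r IHr; by rewrite -/(leaves (Node l r)) last_leaves_node. Qed.

Lemma good_leaves t : 1 < size (leaves t) -> good (leaves t).
Proof.
case: t => // l r _.
constructor; [exact: uniq_leaves | exact: leaves_nil | | exact: head_leaves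
       | exact: head_leavesF | exact: last_leaves | exact: last_leavesT].
move=> p; rewrite /= mem_cat => /orP [] /mapP [q _ ->] //.
Qed.

Lemma mem_leaves t p : p \in leaves t <-> subtree t p = Some Leaf.
Proof.
elim: t p => [|l IHl r IHr] [|b p] /=.
- by rewrite inE.
- by rewrite inE.
- split => //; rewrite mem_cat => /orP [] /mapP [x _] //.
- rewrite mem_cat !mem_cons_map; case: b => /=; [exact: IHr | rewrite orbF; exact: IHl].
Qed.

Lemma subtree_replace t p s s' : subtree t p = Some s -> subtree (replace t p s') p = Some s'.
Proof.
elim: p t => [|b p IH] [|l r] //=; try by case: (s').
case: b => H; exact: IH.
Qed.

Lemma replace_id t p s : subtree t p = Some s -> replace t p s = t.
Proof.
elim: p t => [|b p IH] [|l r] /=; try by case.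
case: b => H; by rewrite (IH _ H).
Qed.

Lemma replace_replace t p s a c : subtree t p = Some s ->
  replace (replace t p a) p c = replace t p c.
Proof.
elim: p t => [|b p IH] [|l r] //=; try by case: (a).
 case: b => H /=; by rewrite (IH _ H).
Qed.

Lemma leaves_replace t p s : subtree t p = Some s ->
  exists pre post, forall s', leaves (replace t p s') = pre ++ map (cat p) (leaves s') ++ post.
Proof.
elim: p t => [|b p IH] t.
  move=> _; exists [::], [::] => s'; rewrite /= cats0.
  have -> : replace t [::] s' = s' by case: (t).
  by elim: (leaves s') => //= x q <-.
case: t => //= l r; case: b => H; have [pre [post Hp]] := IH _ H.
- exists (map (cons false) (leaves l) ++ map (cons true) pre), (map (cons true) post).
  move=> s'; rewrite /= Hp !map_cat -!catA -map_comp; by [].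
- exists (map (cons false) pre), (map (cons false) post ++ map (cons true) (leaves r)).
  move=> s'; rewrite /= Hp !map_cat -!catA -map_comp; by [].
Qed.

Lemma last_branching_cherry t v : last_branching t v -> subtree t v = Some cherry.
Proof. rewrite /last_branching; by case: (subtree t v) => [[|[|? ?] [|? ?]]|]. Qed.

Definition inv_map (y : marked_tree) : marked_tree :=
  let: (T, w) := y in
  let T1 := replace T w Leaf in
  let V := Vsel (leaves T1) w in
  (replace T1 V cherry, V).

Lemma pi_eq T v : pi_map (T, v) =
  (replace (replace T v Leaf) (Lsel (leaves (replace T v Leaf)) v) cherry,
   Lsel (leaves (replace T v Leaf)) v).
Proof. by []. Qed.

Lemma inv_eq T v : inv_map (T, v) =
  (replace (replace T v Leaf) (Vsel (leaves (replace T v Leaf)) v) cherry,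
   Vsel (leaves (replace T v Leaf)) v).
Proof. by []. Qed.

Lemma remove_good n T v : 1 <= n -> in_hatT n (T, v) ->
  [/\ subtree T v = Some cherry, good (leaves (replace T v Leaf)),
      v \in leaves (replace T v Leaf) & size (leaves (replace T v Leaf)) = n.+1].
Proof.
move=> hn /andP [Hs Hlb]; simpl in Hs, Hlb.
have Hc := last_branching_cherry Hlb.
have [pre [post E]] := leaves_replace Hc.
have Sz : size (leaves (replace T v Leaf)) = n.+1.
  move: Hs; rewrite /in_T /= -{1}(replace_id Hc) !E !size_cat !size_map /=.
  rewrite !add1n !add2n !addnS => /eqP H; apply/eqP; by rewrite -eqSS H.
split => //.
- apply: good_leaves; by rewrite Sz ltnS.
- apply/mem_leaves; exact: subtree_replace Hc.
Qed.

Lemma add_hat n T1 L : subtree T1 L = Some Leaf -> size (leaves T1) = n.+1 ->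
  in_hatT n (replace T1 L cherry, L).
Proof.
move=> H Sz; have [pre [post E]] := leaves_replace H.
apply/andP; split.
- move: Sz; rewrite /in_T /= -{1}(replace_id H) !E !size_cat !size_map /=.
  by rewrite !add1n !add2n !addnS => [[->]].
- by rewrite /last_branching (subtree_replace _ H).
Qed.

Lemma inv_pi n x : 1 <= n -> in_hatT n x -> inv_map (pi_map x) = x.
Proof.
case: x => T v hn Hx.
have [Hc G Hv Sz] := remove_good hn Hx.
have [HL HV] := core1 G Hv.
move/mem_leaves: HL => HL.
rewrite pi_eq inv_eq (replace_replace _ _ HL) (replace_id HL) HV.
by rewrite (replace_replace _ _ Hc) (replace_id Hc).
Qed.

Theorem lemma2 (n : nat) (hn : 1 <= n) :
  (forall x : marked_tree, in_hatT n x -> in_hatT n (pi_map x)) /\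
  {in in_hatT n &, injective pi_map} /\
  (forall y : marked_tree, in_hatT n y -> exists2 x, in_hatT n x & pi_map x = y).
Proof.
split; [|split].
- case=> T v Hx.
  have [Hc G Hv Sz] := remove_good hn Hx.
  have [HL _] := core1 G Hv.
  rewrite pi_eq; apply: add_hat => //; exact/mem_leaves.
- move=> x y Hx Hy E.
  by rewrite -(inv_pi hn Hx) E (inv_pi hn Hy).
- case=> T w Hy.
  have [Hc G Hw Sz] := remove_good hn Hy.
  have [HV HLV] := core2 G Hw.
  move/mem_leaves: HV => HV.
  exists (inv_map (T, w)).
    rewrite inv_eq; exact: add_hat.
  rewrite inv_eq pi_eq (replace_replace _ _ HV) (replace_id HV) HLV.
  by rewrite (replace_replace _ _ Hc) (replace_id Hc).
Qed.
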